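(* Let $a,b,c>0$. Let $B(a,b,c)$ denote the semi-infinite real symmetric matrix indexed by $j,k\in\mathbb{Z}_{+}=\{0,1,2,\ldots\}$ with entries \[ B(a,b,c)_{j,k}=\frac{\Gamma(j+k+a)}{\Gamma(j+k+b+c)}\sqrt{\frac{\Gamma(j+b)\Gamma(j+c)\Gamma(k+b)\Gamma(k+c)}{\Gamma(j+a)\,j!\,\Gamma(k+a)\,k!}}. \] Let $A$ be the semi-infinite matrix indexed by $\mathbb{Z}_{+}$ with entries $A_{2j,2k}=B(a,b,c)_{j,k}$, $A_{2j+1,2k+1}=B(a+1,b+1,c)_{j,k}$ for $j,k\in\mathbb{Z}_{+}$, and $A_{j,k}=0$ whenever $j,k$ have different parity. Let $D$ be the semi-infinite matrix with $D_{j,j+1}=-D_{j+1,j}=d(j)$ for $j\in\mathbb{Z}_{+}$ and $D_{j,k}=0$ otherwise, where \[ d(2j)=\sqrt{(j+a)(j+b)},\qquad d(2j+1)=\sqrt{(j+1)(j+c)},\qquad j\in\mathbb{Z}_{+}. \] Then $A$ and $D$ commute, i.e. $AD=DA$ (the matrix products being well defined entrywise since $D$ has finitely many nonzero entries in each row and column).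
   Context: $\Gamma$ is Euler's Gamma function. $A$ corresponds to the direct sum $B(a,b,c)\oplus B(a+1,b+1,c)$ with respect to the decomposition $\ell^2(\mathbb{Z}_+)=\ell^2(2\mathbb{Z}_+)\oplus\ell^2(2\mathbb{Z}_++1)$. *)

(* Defs.v *)
From Stdlib Require Import Reals Lra Arith Bool.
From Coquelicot Require Import Coquelicot.
Open Scope R_scope.
Open Scope bool_scope.

Definition Gamma (x : R) : R :=
  RInt_gen (fun t => Rpower t (x - 1) * exp (- t)) (at_right 0) (Rbar_locally p_infty).

Definition smat := nat -> nat -> R.

Definition smat_mul (A B : smat) : smat :=
  fun j k => Series (fun l => A j l * B l k).

Definition Bmat (a b c : R) : smat := fun j k =>
  Gamma (INR j + INR k + a) / Gamma (INR j + INR k + b + c) *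
  sqrt ((Gamma (INR j + b) * Gamma (INR j + c) * Gamma (INR k + b) * Gamma (INR k + c)) /
        (Gamma (INR j + a) * INR (fact j) * Gamma (INR k + a) * INR (fact k))).

Definition Amat (a b c : R) : smat := fun j k =>
  if Nat.even j && Nat.even k then Bmat a b c (Nat.div2 j) (Nat.div2 k)
  else if Nat.odd j && Nat.odd k then Bmat (a + 1) (b + 1) c (Nat.div2 j) (Nat.div2 k)
  else 0.

Definition dcoef (a b c : R) (n : nat) : R :=
  let j := INR (Nat.div2 n) in
  if Nat.even n then sqrt ((j + a) * (j + b)) else sqrt ((j + 1) * (j + c)).

Definition Dmat (a b c : R) : smat := fun j k =>
  if Nat.eqb k (S j) then dcoef a b c j
  else if Nat.eqb j (S k) then - dcoef a b c k
  else 0.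

(* Main.v *)
Require Import Defs.
From Stdlib Require Import Reals Lra Lia Arith.
From Coquelicot Require Import Coquelicot.
Open Scope R_scope.

Lemma exp_le_m (u v : R) : u <= v -> exp u <= exp v.
Proof. intros H; destruct (Rle_lt_or_eq_dec _ _ H) as [H1|H1].
  - left; now apply exp_increasing.
  - rewrite H1; right; reflexivity. Qed.

Lemma ln_le_m1 (u : R) : 0 < u -> ln u <= u - 1.
Proof. intros H. pose proof (exp_ineq1_le (ln u)). rewrite exp_ln in H0 by lra. lra. Qed.

Lemma ln_bound (y t : R) : 0 < y -> 0 < t -> y * ln t <= y * ln (2*y) - y + t/2.
Proof.
  intros Hy Ht.
  set (u := t / (2*y)).
  assert (Hu : 0 < u) by (unfold u; apply Rdiv_lt_0_compat; lra).
  assert (E : t = (2*y) * u) by (unfold u; field; lra).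
  rewrite E at 1. rewrite ln_mult by lra.
  pose proof (ln_le_m1 u Hu).
  assert (y * ln u <= y * (u - 1)) by (apply Rmult_le_compat_l; lra).
  assert (y * u = t/2) by (unfold u; field; lra).
  nra.
Qed.

Definition fe (x t : R) := exp ((x-1) * ln t - t).

Lemma fe_eq (x t : R) : Rpower t (x-1) * exp (-t) = fe x t.
Proof. unfold Rpower, fe. rewrite <- exp_plus. f_equal; ring. Qed.

Lemma at_right0_pos : at_right 0 (fun t => 0 < t).
Proof. unfold at_right, within. now apply filter_forall. Qed.

Definition KK (x : R) := (x+1) * ln (2*(x+1)).
Definition ge (x t : R) := exp ((x-1)*ln t - (x+1)*ln (1+t) + KK x).
Definition GG (x t : R) := exp (x*(ln t - ln (1+t)) + KK x) / x.

Lemma fe_le_ge x t : 0 < x -> 0 < t -> fe x t <= ge x t.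
Proof.
  intros Hx Ht. unfold fe, ge. apply exp_le_m.
  pose proof (ln_bound (x+1) (1+t) ltac:(lra) ltac:(lra)). unfold KK. lra.
Qed.

Lemma fe_pos x t : 0 < fe x t.
Proof. apply exp_pos. Qed.

Lemma ge_alt x t : 0 < t -> ge x t = exp (x*(ln t - ln (1+t)) + KK x) * / t * / (1+t).
Proof.
  intros Ht. unfold ge.
  replace ((x-1)*ln t - (x+1)*ln (1+t) + KK x) with
     ((x*(ln t - ln (1+t)) + KK x) + (- ln t) + (- ln (1+t))) by ring.
  rewrite !exp_plus, !exp_Ropp, !exp_ln by lra. reflexivity.
Qed.

Lemma GG_deriv x t : 0 < x -> 0 < t -> is_derive (GG x) t (ge x t).
Proof.
  intros Hx Ht. unfold GG. auto_derive.
  - repeat split; lra.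
  - rewrite ge_alt by lra. unfold Rminus. field. lra.
Qed.

Lemma fe_cont x z : 0 < z -> continuous (fe x) z.
Proof. intros Hz. apply (ex_derive_continuous (fe x)). unfold fe. auto_derive. lra. Qed.

Lemma ge_cont x z : 0 < z -> continuous (ge x) z.
Proof. intros Hz. apply (ex_derive_continuous (ge x)). unfold ge. auto_derive. repeat split; lra. Qed.

Lemma fe_exRInt x u v : 0 < u -> 0 < v -> ex_RInt (fe x) u v.
Proof.
  intros Hu Hv. apply (ex_RInt_continuous (V:=R_CompleteNormedModule)). intros z Hz. apply fe_cont.
  assert (0 < Rmin u v) by (apply Rmin_glb_lt; lra). lra.
Qed.

Lemma ge_exRInt x u v : 0 < u -> 0 < v -> ex_RInt (ge x) u v.
Proof.
  intros Hu Hv. apply (ex_RInt_continuous (V:=R_CompleteNormedModule)). intros z Hz. apply ge_cont.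
  assert (0 < Rmin u v) by (apply Rmin_glb_lt; lra). lra.
Qed.

Lemma RInt_ge x u v : 0 < x -> 0 < u -> 0 < v -> RInt (ge x) u v = GG x v - GG x u.
Proof.
  intros Hx Hu Hv. apply is_RInt_unique.
  assert (0 < Rmin u v) by (apply Rmin_glb_lt; lra).
  apply (is_RInt_derive (V:=R_CompleteNormedModule) (GG x) (ge x)).
  - intros z Hz. apply GG_deriv; lra.
  - intros z Hz. apply ge_cont; lra.
Qed.

Lemma RInt_fe_bound x u v : 0 < x -> 0 < u -> 0 < v ->
  Rabs (RInt (fe x) u v) <= Rabs (GG x v - GG x u).
Proof.
  intros Hx.
  assert (K : forall u v, 0 < u -> 0 < v -> u <= v ->
             Rabs (RInt (fe x) u v) <= Rabs (GG x v - GG x u)).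
  { intros a b Ha Hb Hab.
    assert (0 <= RInt (fe x) a b).
    { apply RInt_ge_0; auto. apply fe_exRInt; auto. intros; left; apply fe_pos. }
    assert (RInt (fe x) a b <= RInt (ge x) a b).
    { apply RInt_le; auto. apply fe_exRInt; auto. apply ge_exRInt; auto.
      intros z Hz. apply fe_le_ge; lra. }
    rewrite RInt_ge in H0 by auto.
    rewrite (Rabs_right (RInt _ _ _)) by lra. rewrite Rabs_right by lra. lra. }
  intros Hu Hv. destruct (Rle_dec u v) as [H|H].
  - apply K; auto.
  - rewrite <- opp_RInt_swap by (apply fe_exRInt; auto).
    change (Rabs (- RInt (fe x) v u) <= Rabs (GG x v - GG x u)).
    rewrite Rabs_Ropp. rewrite Rabs_minus_sym. apply K; auto; lra.
Qed.

Lemma GG_pos x t : 0 < x -> 0 < GG x t.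
Proof. intros Hx. unfold GG. apply Rdiv_lt_0_compat; [apply exp_pos|lra]. Qed.

Lemma GG_le x t : 0 < x -> 0 < t -> GG x t <= exp (KK x) / x.
Proof.
  intros Hx Ht. unfold GG. unfold Rdiv. apply Rmult_le_compat_r.
  - left; apply Rinv_0_lt_compat; lra.
  - apply exp_le_m. assert (ln t <= ln (1+t)) by (apply ln_le; lra).
    assert (x * (ln t - ln (1+t)) <= 0) by nra. lra.
Qed.

Lemma GG_near0 x eps : 0 < x -> 0 < eps -> at_right 0 (fun t => 0 < t /\ GG x t < eps).
Proof.
  intros Hx He.
  set (L := (ln (x*eps) - KK x) / x).
  assert (H1 : at_right 0 (fun t => ln t < L)).
  { apply (is_lim_ln_0 (fun y => y < L)). exists L. auto. }
  generalize (filter_and _ _ at_right0_pos H1). apply filter_imp.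
  intros t [Ht HL]. split; auto.
  unfold GG. apply (Rmult_lt_reg_r x); [lra|]. unfold Rdiv. rewrite Rmult_assoc, Rinv_l, Rmult_1_r by lra.
  apply Rle_lt_trans with (exp (x * ln t + KK x)).
  - apply exp_le_m. assert (0 <= ln (1+t)) by (rewrite <- ln_1; apply ln_le; lra). nra.
  - replace (eps * x) with (exp (ln (x*eps))) by (rewrite exp_ln by nra; ring). apply exp_increasing.
    unfold L in HL. apply (Rmult_lt_compat_l x) in HL; [|lra].
    replace (x * ((ln (x * eps) - KK x) / x)) with (ln (x*eps) - KK x) in HL by (field; lra).
    rewrite Rmult_comm. lra.
Qed.

Lemma GG_nearinf x eps : 0 < x -> 0 < eps ->
  Rbar_locally p_infty (fun t => 0 < t /\ exp (KK x) / x - GG x t < eps).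
Proof.
  intros Hx He. simpl. exists (exp (KK x) / eps + 1). intros t Ht.
  assert (HE : 0 < exp (KK x)) by apply exp_pos.
  assert (0 < exp (KK x) / eps) by (apply Rdiv_lt_0_compat; lra).
  assert (Ht0 : 0 < t) by lra. split; auto.
  set (w := ln (1+t) - ln t).
  assert (Hw : w <= / t).
  { unfold w. replace (1+t) with (t * (1 + / t)) by (field; lra).
    rewrite ln_mult by (try apply Rplus_lt_0_compat; try apply Rinv_0_lt_compat; lra).
    replace (ln t + ln (1 + / t) - ln t) with (ln (1 + / t)) by ring.
    rewrite <- (ln_exp (/ t)) at 2. apply ln_le.
    - assert (0 < / t) by (apply Rinv_0_lt_compat; lra). lra.
    - apply exp_ineq1_le. }
  unfold GG. replace (x * (ln t - ln (1 + t)) + KK x) with (KK x + (- (x * w))) by (unfold w; ring).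
  rewrite exp_plus.
  pose proof (exp_ineq1_le (- (x*w))).
  assert (exp (KK x) * (1 + - (x*w)) <= exp (KK x) * exp (- (x*w))) by (apply Rmult_le_compat_l; lra).
  assert (exp (KK x) * w <= exp (KK x) * / t) by (apply Rmult_le_compat_l; lra).
  assert (exp (KK x) * / t < eps).
  { apply (Rmult_lt_reg_r t); [lra|]. rewrite Rmult_assoc, Rinv_l, Rmult_1_r by lra.
    apply (Rmult_lt_compat_l eps) in Ht; [|lra].
    replace (eps * (exp (KK x) / eps + 1)) with (exp (KK x) + eps) in Ht by (field; lra). nra. }
  apply (Rmult_lt_reg_r x); [lra|].
  replace ((exp (KK x) / x - exp (KK x) * exp (- (x * w)) / x) * x)
    with (exp (KK x) - exp (KK x) * exp (- (x * w))) by (field; lra).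
  nra.
Qed.

Lemma fe_ex x : 0 < x -> exists l, is_RInt_gen (fe x) (at_right 0) (Rbar_locally p_infty) l.
Proof.
  intros Hx.
  destruct (proj1 (filterlim_locally_cauchy (U:=R_CompleteSpace)
     (F:=filter_prod (at_right 0) (Rbar_locally p_infty))
     (fun ab => RInt (fe x) (fst ab) (snd ab)))) as [l Hl].
  - intros eps.
    assert (He : 0 < eps / 2) by (destruct eps; simpl; lra).
    exists (fun ab => (0 < fst ab /\ GG x (fst ab) < eps/2) /\
                 (0 < snd ab /\ exp (KK x) / x - GG x (snd ab) < eps/2)).
    split.
    + apply (Filter_prod _ _ _ _ _ (GG_near0 x (eps/2) Hx He) (GG_nearinf x (eps/2) Hx He)).
      intros a b Ha Hb. simpl. auto.
    + intros [e1 M1] [e2 M2]; simpl.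
      intros [[He1 Ge1] [HM1 GM1]] [[He2 Ge2] [HM2 GM2]].
      change (Rabs (RInt (fe x) e2 M2 - RInt (fe x) e1 M1) < eps).
      rewrite <- (RInt_Chasles (V:=R_CompleteNormedModule) (fe x) e2 e1 M2)
        by (apply fe_exRInt; auto).
      rewrite <- (RInt_Chasles (V:=R_CompleteNormedModule) (fe x) e1 M1 M2)
        by (apply fe_exRInt; auto).
      change (Rabs (RInt (fe x) e2 e1 + (RInt (fe x) e1 M1 + RInt (fe x) M1 M2) - RInt (fe x) e1 M1) < eps).
      replace (RInt (fe x) e2 e1 + (RInt (fe x) e1 M1 + RInt (fe x) M1 M2) - RInt (fe x) e1 M1)
        with (RInt (fe x) e2 e1 + RInt (fe x) M1 M2) by ring.
      eapply Rle_lt_trans; [apply Rabs_triang|].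
      pose proof (RInt_fe_bound x e2 e1 Hx He2 He1).
      pose proof (RInt_fe_bound x M1 M2 Hx HM1 HM2).
      pose proof (GG_pos x e1 Hx). pose proof (GG_pos x e2 Hx).
      pose proof (GG_le x M1 Hx HM1). pose proof (GG_le x M2 Hx HM2).
      assert (Rabs (GG x e1 - GG x e2) < eps/2) by (apply Rabs_def1; lra).
      assert (Rabs (GG x M2 - GG x M1) < eps/2) by (apply Rabs_def1; lra).
      lra.
  - exists l. intros P HP. specialize (Hl P HP). unfold filtermap in Hl. unfold filtermapi.
    assert (Hpos : filter_prod (at_right 0) (Rbar_locally p_infty)
                   (fun ab : R * R => 0 < fst ab /\ 0 < snd ab)).
    { apply Filter_prod with (Q := fun t => 0 < t) (R := fun t => 0 < t); [exact at_right0_pos| |].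
      + exists 0. auto.
      + intros a b Ha Hb. simpl. auto. }
    generalize (filter_and _ _ Hpos Hl). apply filter_imp.
    intros [a b] [[Ha Hb] HPab]. simpl in *.
    exists (RInt (fe x) a b). split; auto.
    apply (RInt_correct (V:=R_CompleteNormedModule)). apply fe_exRInt; auto.
Qed.

Definition hh (x t : R) := - exp (x * ln t - t).

Lemma fe_alt x t : 0 < t -> fe x t = exp (x * ln t - t) * / t.
Proof.
  intros Ht. unfold fe.
  replace ((x-1)*ln t - t) with ((x*ln t - t) + - ln t) by ring.
  rewrite exp_plus, exp_Ropp, exp_ln by lra. reflexivity.
Qed.

Lemma hh_deriv x t : 0 < t -> is_derive (hh x) t (fe (x+1) t - x * fe x t).
Proof.
  intros Ht. unfold hh. auto_derive.
  - lra.
  - rewrite (fe_alt x) by lra. unfold fe. replace (x+1-1) with x by ring. unfold Rminus. field. lra.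
Qed.

Lemma hh_lim0 x : 0 < x -> filterlim (hh x) (at_right 0) (locally 0).
Proof.
  intros Hx. apply filterlim_locally. intros eps.
  set (L := ln eps / x).
  assert (H1 : at_right 0 (fun t => ln t < L)).
  { apply (is_lim_ln_0 (fun y => y < L)). exists L. auto. }
  generalize (filter_and _ _ at_right0_pos H1). apply filter_imp.
  intros t [Ht HL]. change (Rabs (hh x t - 0) < eps).
  unfold hh. rewrite Rminus_0_r, Rabs_Ropp, Rabs_right by (left; apply exp_pos).
  rewrite <- (exp_ln eps) by (destruct eps; simpl; lra).
  apply exp_increasing. unfold L in HL.
  apply (Rmult_lt_compat_l x) in HL; [|lra].
  replace (x * (ln eps / x)) with (ln eps) in HL by (field; lra). lra.
Qed.

Lemma hh_liminf x : 0 < x -> filterlim (hh x) (Rbar_locally p_infty) (locally 0).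
Proof.
  intros Hx. apply filterlim_locally. intros eps. simpl.
  exists (Rmax 1 (2 * (x * ln (2*x) - x - ln eps))). intros t Ht.
  assert (Ht1 := Rle_lt_trans _ _ _ (Rmax_l _ _) Ht).
  assert (Ht2 := Rle_lt_trans _ _ _ (Rmax_r _ _) Ht).
  change (Rabs (hh x t - 0) < eps).
  unfold hh. rewrite Rminus_0_r, Rabs_Ropp, Rabs_right by (left; apply exp_pos).
  rewrite <- (exp_ln eps) by (destruct eps; simpl; lra).
  apply exp_increasing. pose proof (ln_bound x t Hx ltac:(lra)). lra.
Qed.

Lemma pos_prod : filter_prod (at_right 0) (Rbar_locally p_infty)
                   (fun ab : R * R => 0 < fst ab /\ 0 < snd ab).
Proof.
  apply Filter_prod with (Q := fun t => 0 < t) (R := fun t => 0 < t); [exact at_right0_pos| |].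
  + exists 0. auto.
  + intros a b Ha Hb. simpl. auto.
Qed.

Lemma Gamma_is x : 0 < x ->
  is_RInt_gen (fe x) (at_right 0) (Rbar_locally p_infty) (Gamma x).
Proof.
  intros Hx. destruct (fe_ex x Hx) as [l Hl].
  assert (E : Gamma x = l).
  { unfold Gamma. apply (is_RInt_gen_unique (V:=R_CompleteNormedModule)).
    eapply is_RInt_gen_ext; [apply filter_forall; intros ab z _; symmetry; apply fe_eq|exact Hl].
  }
  rewrite E. exact Hl.
Qed.

Lemma Gamma_succ x : 0 < x -> Gamma (x + 1) = x * Gamma x.
Proof.
  intros Hx.
  assert (HD : is_RInt_gen (Derive (hh x)) (at_right 0) (Rbar_locally p_infty) (0 - 0)).
  { apply is_RInt_gen_Derive.
    - generalize pos_prod. apply filter_imp. intros [a b] [Ha Hb] z Hz. simpl in *.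
      assert (0 < Rmin a b) by (apply Rmin_glb_lt; lra).
      eexists. apply hh_deriv. lra.
    - generalize pos_prod. apply filter_imp. intros [a b] [Ha Hb] z Hz. simpl in *.
      assert (0 < Rmin a b) by (apply Rmin_glb_lt; lra).
      assert (Hz0 : 0 < z) by lra.
      apply (continuous_ext_loc _ (fun s => fe (x+1) s - x * fe x s)).
      + exists (mkposreal z Hz0). intros s Hs. change (Rabs (s - z) < z) in Hs.
        apply Rabs_def2 in Hs. symmetry. apply is_derive_unique. apply hh_deriv. lra.
      + apply (ex_derive_continuous (fun s => fe (x+1) s - x * fe x s)). unfold fe.
        auto_derive. lra.
    - apply hh_lim0; auto.
    - apply hh_liminf; auto. }
  pose proof (Gamma_is x Hx) as Hl.
  pose proof (is_RInt_gen_scal _ x _ Hl) as Hs.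
  pose proof (is_RInt_gen_plus _ _ _ _ HD Hs) as Hp.
  unfold Gamma at 1. apply (is_RInt_gen_unique (V:=R_CompleteNormedModule)).
  assert (Ev : (0 - 0 + x * Gamma x : R) = x * Gamma x) by ring. rewrite <- Ev.
  eapply is_RInt_gen_ext; [|exact Hp].
  generalize pos_prod. apply filter_imp. intros [a b] [Ha Hb] z Hz. simpl in *.
  assert (0 < Rmin a b) by (apply Rmin_glb_lt; lra).
  rewrite fe_eq. rewrite (is_derive_unique _ _ _ (hh_deriv x z ltac:(lra))).
  change (fe (x + 1) z - x * fe x z + x * fe x z = fe (x + 1) z). ring.
Qed.

Lemma sum_delta (p : nat) (al : R) (n : nat) :
  sum_n (fun l => if Nat.eqb l p then al else 0) n = if Nat.leb p n then al else 0.
Proof.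
  induction n as [|n IH].
  - rewrite sum_O. destruct p; simpl; reflexivity.
  - rewrite sum_Sn, IH.
    destruct (Nat.eqb_spec (S n) p); destruct (Nat.leb_spec p n); destruct (Nat.leb_spec p (S n));
      try lia; unfold plus; simpl; ring.
Qed.

Lemma series_delta (p : nat) (al : R) : is_series (fun l => if Nat.eqb l p then al else 0) al.
Proof.
  unfold is_series.
  apply (filterlim_ext_loc (fun _ => al)).
  - exists p. intros n Hn. rewrite sum_delta. rewrite (proj2 (Nat.leb_le p n)) by lia. reflexivity.
  - apply filterlim_const.
Qed.

Lemma series2 (u : nat -> R) (p q : nat) (al be : R) :
  (forall l, u l = (if Nat.eqb l p then al else 0) + (if Nat.eqb l q then be else 0)) ->
  Series u = al + be.
Proof.
  intros H. apply is_series_unique.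
  eapply is_series_ext. { intros l. symmetry. apply H. }
  apply (is_series_plus _ _ _ _ (series_delta p al) (series_delta q be)).
Qed.

Lemma AD_entry a b c j k :
  smat_mul (Amat a b c) (Dmat a b c) j k =
  (match k with 0%nat => 0 | S k' => Amat a b c j k' * dcoef a b c k' end)
  - Amat a b c j (S k) * dcoef a b c k.
Proof.
  unfold smat_mul. destruct k as [|k'].
  - rewrite (series2 _ 1%nat 0%nat (- (Amat a b c j 1%nat * dcoef a b c 0%nat)) 0); [ring|].
    intros l. unfold Dmat.
    destruct (Nat.eqb_spec 0 (S l)); [lia|].
    destruct (Nat.eqb_spec l 1); destruct (Nat.eqb_spec l 0); subst; try lia; ring.
  - rewrite (series2 _ k' (S (S k')) (Amat a b c j k' * dcoef a b c k')
        (- (Amat a b c j (S (S k')) * dcoef a b c (S k')))); [ring|].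
    intros l. unfold Dmat.
    destruct (Nat.eqb_spec (S k') (S l)); destruct (Nat.eqb_spec l (S (S k')));
    destruct (Nat.eqb_spec l k'); subst; try lia; ring.
Qed.

Lemma DA_entry a b c j k :
  smat_mul (Dmat a b c) (Amat a b c) j k =
  dcoef a b c j * Amat a b c (S j) k
  - (match j with 0%nat => 0 | S j' => dcoef a b c j' * Amat a b c j' k end).
Proof.
  unfold smat_mul. destruct j as [|j'].
  - rewrite (series2 _ 1%nat 0%nat (dcoef a b c 0%nat * Amat a b c 1%nat k) 0); [ring|].
    intros l. unfold Dmat.
    destruct (Nat.eqb_spec l 1); destruct (Nat.eqb_spec 0 (S l)); destruct (Nat.eqb_spec l 0);
      subst; try lia; ring.
  - rewrite (series2 _ (S (S j')) j' (dcoef a b c (S j') * Amat a b c (S (S j')) k)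
        (- (dcoef a b c j' * Amat a b c j' k))); [ring|].
    intros l. unfold Dmat.
    destruct (Nat.eqb_spec l (S (S j'))); destruct (Nat.eqb_spec (S j') (S l));
    destruct (Nat.eqb_spec l j'); subst; try lia; ring.
Qed.

Lemma Aee a b c (m n : nat) : Amat a b c (2*m)%nat (2*n)%nat = Bmat a b c m n.
Proof. unfold Amat. rewrite !Nat.even_even, !Nat.div2_double. reflexivity. Qed.
Lemma Aoo a b c (m n : nat) : Amat a b c (S (2*m)) (S (2*n)) = Bmat (a+1) (b+1) c m n.
Proof. unfold Amat. rewrite !Nat.even_succ, !Nat.odd_succ, !Nat.odd_even, !Nat.even_even, !Nat.div2_succ_double. reflexivity. Qed.
Lemma Aeo a b c (m n : nat) : Amat a b c (2*m)%nat (S (2*n)) = 0.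
Proof. unfold Amat. rewrite !Nat.even_succ, !Nat.odd_succ, !Nat.odd_even, !Nat.even_even. reflexivity. Qed.
Lemma Aoe a b c (m n : nat) : Amat a b c (S (2*m)) (2*n)%nat = 0.
Proof. unfold Amat. rewrite !Nat.even_succ, !Nat.odd_succ, !Nat.odd_even, !Nat.even_even. reflexivity. Qed.
Lemma de a b c (m : nat) : dcoef a b c (2*m)%nat = sqrt ((INR m + a) * (INR m + b)).
Proof. unfold dcoef. rewrite Nat.even_even, Nat.div2_double. reflexivity. Qed.
Lemma do_ a b c (m : nat) : dcoef a b c (S (2*m)) = sqrt ((INR m + 1) * (INR m + c)).
Proof. unfold dcoef. rewrite Nat.even_succ, Nat.odd_even, Nat.div2_succ_double. reflexivity. Qed.

Definition Bpre a b c (m n : nat) := Gamma (INR m + INR n + a) / Gamma (INR m + INR n + b + c).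
Definition Barg a b c (m n : nat) :=
  (Gamma (INR m + b) * Gamma (INR m + c) * Gamma (INR n + b) * Gamma (INR n + c)) /
  (Gamma (INR m + a) * INR (fact m) * Gamma (INR n + a) * INR (fact n)).
Definition Qarg a b c (m n : nat) :=
  (Gamma (INR m + (b+1)) * Gamma (INR m + c) * Gamma (INR n + b) * Gamma (INR n + c)) /
  (Gamma (INR m + (a+1)) * INR (fact m) * Gamma (INR n + a) * INR (fact n)).

Lemma Bmat_split a b c m n : Bmat a b c m n = Bpre a b c m n * sqrt (Barg a b c m n).
Proof. reflexivity. Qed.

Lemma sqrt_mult_r P r : 0 <= r -> sqrt (P * r) = sqrt P * sqrt r.
Proof. intros H. rewrite Rmult_comm, sqrt_mult_alt by exact H. ring. Qed.

Lemma eq_mul_sqrt A1 A2 X Y : A1 = A2 -> X = Y -> A1 * sqrt X = A2 * sqrt Y.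
Proof. intros -> ->. reflexivity. Qed.

Lemma sqrt_comb1 x p q : 0 <= p -> 0 <= q -> x = p*p*q -> sqrt x = p * sqrt q.
Proof. intros Hp Hq ->. rewrite sqrt_mult_alt, sqrt_square; auto. apply Rmult_le_pos; auto. Qed.

Lemma sqrt_comb2 x y p q : 0 <= x -> 0 <= y -> 0 <= p -> 0 <= q -> x*y = p*p*q ->
  sqrt x * sqrt y = p * sqrt q.
Proof. intros Hx Hy Hp Hq E. rewrite <- sqrt_mult by auto. apply sqrt_comb1; auto. Qed.

Ltac posi := repeat (first [apply Rdiv_lt_0_compat | apply Rmult_lt_0_compat | apply Rinv_0_lt_compat]); lra.
Ltac nonneg := left; posi.

Section S.
Variables (a b c : R) (ha : 0 < a) (hb : 0 < b) (hc : 0 < c).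

Lemma L1 m n : Bmat a b c m (S n) =
  Bpre a b c m n * ((INR m + INR n + a) / (INR m + INR n + b + c)) * sqrt (Barg a b c m n)
  * sqrt ((INR n + b) * (INR n + c) / ((INR n + a) * (INR n + 1))).
Proof.
  pose proof (pos_INR m) as HM. pose proof (pos_INR n) as HN.
  unfold Bmat. rewrite S_INR.
  replace (INR m + (INR n + 1) + a) with ((INR m + INR n + a) + 1) by ring.
  replace (INR m + (INR n + 1) + b + c) with ((INR m + INR n + b + c) + 1) by ring.
  replace (INR n + 1 + a) with ((INR n + a) + 1) by ring.
  replace (INR n + 1 + b) with ((INR n + b) + 1) by ring.
  replace (INR n + 1 + c) with ((INR n + c) + 1) by ring.
  change (fact (S n)) with (S n * fact n)%nat. rewrite mult_INR, S_INR.
  rewrite (Gamma_succ (INR m + INR n + a)), (Gamma_succ (INR m + INR n + b + c)),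
    (Gamma_succ (INR n + a)), (Gamma_succ (INR n + b)), (Gamma_succ (INR n + c)) by lra.
  rewrite (Rmult_assoc _ (sqrt (Barg a b c m n))), <- sqrt_mult_r by nonneg.
  apply eq_mul_sqrt; unfold Bpre, Barg, Rdiv; rewrite ?Rinv_mult; ring.
Qed.

Lemma L2 m n : Bmat (a+1) (b+1) c m n =
  Bpre a b c m n * ((INR m + INR n + a) / (INR m + INR n + b + c)) * sqrt (Barg a b c m n)
  * sqrt ((INR m + b) * (INR n + b) / ((INR m + a) * (INR n + a))).
Proof.
  pose proof (pos_INR m) as HM. pose proof (pos_INR n) as HN.
  unfold Bmat.
  replace (INR m + INR n + (a+1)) with ((INR m + INR n + a) + 1) by ring.
  replace (INR m + INR n + (b+1) + c) with ((INR m + INR n + b + c) + 1) by ring.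
  replace (INR n + (a+1)) with ((INR n + a) + 1) by ring.
  replace (INR n + (b+1)) with ((INR n + b) + 1) by ring.
  replace (INR m + (a+1)) with ((INR m + a) + 1) by ring.
  replace (INR m + (b+1)) with ((INR m + b) + 1) by ring.
  rewrite (Gamma_succ (INR m + INR n + a)), (Gamma_succ (INR m + INR n + b + c)),
    (Gamma_succ (INR n + a)), (Gamma_succ (INR n + b)), (Gamma_succ (INR m + a)),
    (Gamma_succ (INR m + b)) by lra.
  rewrite (Rmult_assoc _ (sqrt (Barg a b c m n))), <- sqrt_mult_r by nonneg.
  apply eq_mul_sqrt; unfold Bpre, Barg, Rdiv; rewrite ?Rinv_mult; ring.
Qed.

Lemma L3 m n : Bmat (a+1) (b+1) c m n =
  Bpre a b c (S m) n * sqrt (Qarg a b c m n) * sqrt ((INR n + b) / (INR n + a)).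
Proof.
  pose proof (pos_INR m) as HM. pose proof (pos_INR n) as HN.
  unfold Bmat, Bpre. rewrite S_INR.
  replace (INR m + 1 + INR n + a) with (INR m + INR n + (a+1)) by ring.
  replace (INR m + 1 + INR n + b + c) with (INR m + INR n + (b+1) + c) by ring.
  replace (INR n + (a+1)) with ((INR n + a) + 1) by ring.
  replace (INR n + (b+1)) with ((INR n + b) + 1) by ring.
  rewrite (Gamma_succ (INR n + a)), (Gamma_succ (INR n + b)) by lra.
  rewrite (Rmult_assoc _ (sqrt (Qarg a b c m n))), <- sqrt_mult_r by nonneg.
  apply eq_mul_sqrt; unfold Qarg, Rdiv; rewrite ?Rinv_mult; ring.
Qed.

Lemma L4 m n : Barg a b c (S m) n = Qarg a b c m n * ((INR m + c) / (INR m + 1)).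
Proof.
  pose proof (pos_INR m) as HM. pose proof (pos_INR n) as HN.
  unfold Barg, Qarg. rewrite S_INR.
  replace (INR m + 1 + a) with (INR m + (a+1)) by ring.
  replace (INR m + 1 + b) with (INR m + (b+1)) by ring.
  replace (INR m + 1 + c) with ((INR m + c) + 1) by ring.
  change (fact (S m)) with (S m * fact m)%nat. rewrite mult_INR, S_INR.
  rewrite (Gamma_succ (INR m + c)) by lra.
  unfold Rdiv; rewrite ?Rinv_mult; ring.
Qed.

Definition rho n := (INR n + b) / (INR n + a).

Lemma T1 m n : Bmat a b c m n * sqrt ((INR n + a) * (INR n + b)) =
  Bpre a b c m n * sqrt (Barg a b c m n) * ((INR n + a) * sqrt (rho n)).
Proof.
  pose proof (pos_INR n) as HN.
  rewrite Bmat_split. f_equal. apply sqrt_comb1; try lra. unfold rho; nonneg.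
  unfold rho; field; lra.
Qed.

Lemma T2 m n : Bmat a b c m (S n) * sqrt ((INR n + 1) * (INR n + c)) =
  Bpre a b c m n * ((INR m + INR n + a) / (INR m + INR n + b + c)) * sqrt (Barg a b c m n)
  * ((INR n + c) * sqrt (rho n)).
Proof.
  pose proof (pos_INR n) as HN.
  rewrite L1, Rmult_assoc. f_equal. apply sqrt_comb2; try lra; try (unfold rho); try nonneg.
  field; lra.
Qed.

Lemma T3 m n : sqrt ((INR m + a) * (INR m + b)) * Bmat (a+1) (b+1) c m n =
  Bpre a b c m n * ((INR m + INR n + a) / (INR m + INR n + b + c)) * sqrt (Barg a b c m n)
  * ((INR m + b) * sqrt (rho n)).
Proof.
  pose proof (pos_INR m) as HM. pose proof (pos_INR n) as HN.
  rewrite L2, Rmult_comm, Rmult_assoc. f_equal. rewrite Rmult_comm.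
  apply sqrt_comb2; try lra; try (unfold rho); try nonneg.
  field; lra.
Qed.

Lemma T4 m n : sqrt ((INR m + 1) * (INR m + c)) * Bmat (a+1) (b+1) c m n =
  Bpre a b c (S m) n * sqrt (Qarg a b c m n) * sqrt (rho n) *
  ((INR m + 1) * sqrt ((INR m + c) / (INR m + 1))).
Proof.
  pose proof (pos_INR m) as HM.
  rewrite L3, Rmult_comm. f_equal. apply sqrt_comb1; try lra. nonneg.
  field; lra.
Qed.

Lemma core m n :
  Bmat a b c m n * sqrt ((INR n + a) * (INR n + b))
  - Bmat a b c m (S n) * sqrt ((INR n + 1) * (INR n + c)) =
  sqrt ((INR m + a) * (INR m + b)) * Bmat (a+1) (b+1) c m n
  - (match m with 0%nat => 0 | S m' =>
       sqrt ((INR m' + 1) * (INR m' + c)) * Bmat (a+1) (b+1) c m' n end).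
Proof.
  pose proof (pos_INR m) as HM. pose proof (pos_INR n) as HN.
  rewrite T1, T2, T3.
  destruct m as [|m'].
  - simpl INR. field. lra.
  - pose proof (pos_INR m') as HM'. rewrite T4. rewrite L4, sqrt_mult_r by nonneg.
    rewrite S_INR in *.
    field. lra.
Qed.
End S.

Lemma Bsym a b c m n : Bmat a b c m n = Bmat a b c n m.
Proof.
  unfold Bmat. rewrite (Rplus_comm (INR m) (INR n)). f_equal. f_equal.
  unfold Rdiv. f_equal; [ring|]. f_equal. ring.
Qed.

Lemma Azero a b c j k : Nat.even j <> Nat.even k -> Amat a b c j k = 0.
Proof.
  intros H. unfold Amat. rewrite <- !Nat.negb_even.
  destruct (Nat.even j), (Nat.even k); simpl; try reflexivity; congruence.
Qed.

Lemma even_S n : Nat.even (S n) = negb (Nat.even n).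
Proof. rewrite Nat.even_succ, Nat.negb_even. reflexivity. Qed.

Theorem mainTheorem1 (a b c : R) (ha : 0 < a) (hb : 0 < b) (hc : 0 < c) :
  forall j k : nat,
    smat_mul (Amat a b c) (Dmat a b c) j k = smat_mul (Dmat a b c) (Amat a b c) j k.
Proof.
  intros j k. rewrite AD_entry, DA_entry.
  destruct (Bool.bool_dec (Nat.even j) (Nat.even k)) as [E|E].
  - assert (Z1 : (match k with 0%nat => 0 | S k' => Amat a b c j k' * dcoef a b c k' end) = 0).
    { destruct k as [|k']; [reflexivity|]. rewrite Azero; [ring|].
      rewrite E, even_S. destruct (Nat.even k'); discriminate. }
    assert (Z2 : (match j with 0%nat => 0 | S j' => dcoef a b c j' * Amat a b c j' k end) = 0).
    { destruct j as [|j']; [reflexivity|]. rewrite Azero; [ring|].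
      rewrite <- E, even_S. destruct (Nat.even j'); discriminate. }
    rewrite Z1, Z2, (Azero a b c j (S k)), (Azero a b c (S j) k).
    + ring.
    + rewrite even_S, E. destruct (Nat.even k); discriminate.
    + rewrite even_S, E. destruct (Nat.even k); discriminate.
  - destruct (Nat.Even_or_Odd j) as [[m Hm]|[m Hm]];
    destruct (Nat.Even_or_Odd k) as [[n Hn]|[n Hn]]; subst j k.
    + rewrite !Nat.even_even in E. congruence.
    + replace (2*n+1)%nat with (S (2*n)) by lia.
      replace (S (S (2*n))) with (2 * S n)%nat by lia.
      rewrite Aee, Aee, Aoo, de, de, do_.
      pose proof (core a b c ha hb hc m n) as C.
      destruct m as [|m'].
      * simpl (2 * 0)%nat. lra.
      * replace (2 * S m')%nat with (S (S (2*m'))) by lia.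
        rewrite do_, Aoo. lra.
    + replace (2*m+1)%nat with (S (2*m)) by lia.
      replace (S (S (2*m))) with (2 * S m)%nat by lia.
      rewrite Aoo, Aee, Aee, !de, !do_.
      pose proof (core a b c ha hb hc n m) as C.
      rewrite (Bsym a b c n m), (Bsym a b c n (S m)), (Bsym (a+1) (b+1) c n m) in C.
      destruct n as [|n'].
      * simpl (2 * 0)%nat. lra.
      * replace (2 * S n')%nat with (S (S (2*n'))) by lia.
        rewrite do_, Aoo. rewrite (Bsym (a+1) (b+1) c n' m) in C. lra.
    + replace (2*m+1)%nat with (S (2*m)) in E by lia.
      replace (2*n+1)%nat with (S (2*n)) in E by lia.
      rewrite !even_S, !Nat.even_even in E. congruence.
Qed.
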